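(* Let $a_0,a_1,a_2$ be elements of a field $K$ and let $(F(n,k))_{n\ge 0,\,k\in\mathbb{Z}}$ be defined by $F(0,0)=1$, $F(n,k)=0$ whenever $k<0$ or $k>n$, and \[ F(n,k)=F(n-1,k-1)+(a_2n+a_1k+a_0)\,F(n-1,k)\qquad(n\ge1). \] Then for every $n\ge 0$, in the polynomial ring $K[x]$, \[ \prod_{i=0}^{n-1}(x+ia_2)=\sum_{k=0}^{n}F(n,k)\prod_{i=0}^{k-1}(x-a_0-a_2-ia_1). \]
   Context: Empty products equal $1$. *)

(* Defs.v *)
From mathcomp Require Import all_boot all_order all_algebra.
Set Implicit Arguments. Unset Strict Implicit. Unset Printing Implicit Defensive.
Import Order.TTheory GRing.Theory Num.Theory.
Local Open Scope ring_scope.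

Fixpoint Ftri (K : fieldType) (a0 a1 a2 : K) (n : nat) (k : int) : K :=
  match n with
  | 0%N => if k == 0 then 1 else 0
  | m.+1 => if (0 <= k) && (k <= (m.+1)%:Z)
            then Ftri a0 a1 a2 m (k - 1) + (a2 * (m.+1)%:R + a1 * k%:~R + a0) * Ftri a0 a1 a2 m k
            else 0
  end.

(* Main.v *)
Require Import Defs.
From mathcomp Require Import all_boot all_order all_algebra.
From mathcomp Require Import ring.
Set Implicit Arguments. Unset Strict Implicit.
Import Order.TTheory GRing.Theory Num.Theory.
Local Open Scope ring_scope.

Lemma sub1S (i:nat) : (i.+1)%:Z - 1 = i.
Proof. by rewrite -addn1 PoszD addrK. Qed.

Section S.
Variables (K : fieldType) (a0 a1 a2 : K).

Lemma Fneg n (k : int) : k < 0 -> Ftri a0 a1 a2 n k = 0.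
Proof.
case: n => [|n] /= hk.
  by case: eqP => // e; rewrite e in hk.
by rewrite lt_geF.
Qed.

Lemma Fbig n (k : nat) : (n < k)%N -> Ftri a0 a1 a2 n k = 0.
Proof.
case: n => [|n] /= hk.
  by case: k hk.
by rewrite lez_nat leqNgt hk.
Qed.

Lemma Fstep n (k : nat) : (k <= n.+1)%N ->
  Ftri a0 a1 a2 n.+1 k = Ftri a0 a1 a2 n (k%:Z - 1) +
     (a2 * (n.+1)%:R + a1 * k%:R + a0) * Ftri a0 a1 a2 n k.
Proof. by move=> hk /=; rewrite lez_nat hk. Qed.

Definition P (k : nat) : {poly K} := \prod_(i < k) ('X - (a0 + a2 + i%:R * a1)%:P).

Lemma Pstep n k : P k * ('X + (n%:R * a2)%:P) =
   P k.+1 + (a2 * (n.+1)%:R + a1 * k%:R + a0)%:P * P k.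
Proof.
rewrite /P big_ord_recr /=.
rewrite -addn1 natrD !polyCD !polyCM.
ring.
Qed.

End S.

Theorem mainTheorem6 (K : fieldType) (a0 a1 a2 : K) (n : nat) :
  \prod_(i < n) ('X + (i%:R * a2)%:P) =
  \sum_(k < n.+1) (Ftri a0 a1 a2 n (k%:Z))%:P *
     \prod_(i < k) ('X - (a0 + a2 + i%:R * a1)%:P) :> {poly K}.
Proof.
elim: n => [|n IH].
  by rewrite big_ord0 big_ord1 big_ord0 /= mulr1.
change (\prod_(i < n.+1) ('X + (i%:R * a2)%:P) =
  \sum_(k < n.+2) (Ftri a0 a1 a2 n.+1 (k%:Z))%:P * P a0 a1 a2 k).
change (\prod_(i < n) ('X + (i%:R * a2)%:P) =
  \sum_(k < n.+1) (Ftri a0 a1 a2 n (k%:Z))%:P * P a0 a1 a2 k) in IH.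
rewrite big_ord_recr /= IH mulr_suml.
rewrite (eq_bigr (fun k : 'I_n.+1 => (Ftri a0 a1 a2 n k)%:P * P a0 a1 a2 k.+1 +
   ((a2 * (n.+1)%:R + a1 * k%:R + a0) * Ftri a0 a1 a2 n k)%:P * P a0 a1 a2 k)); last first.
  move=> k _; rewrite -mulrA Pstep polyCM; ring.
rewrite big_split /=.
rewrite [X in X + _ = _](_ : _ = \sum_(j < n.+2) (Ftri a0 a1 a2 n (j%:Z - 1))%:P * P a0 a1 a2 j); last first.
  rewrite [RHS]big_ord_recl /= Fneg // polyC0 mul0r add0r.
  by apply: eq_bigr => i _; rewrite /bump /= add1n sub1S.
rewrite [X in _ + X = _](_ : _ = \sum_(j < n.+2) ((a2 * (n.+1)%:R + a1 * j%:R + a0) * Ftri a0 a1 a2 n j)%:P * P a0 a1 a2 j); last first.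
  by rewrite [RHS]big_ord_recr /= Fbig // mulr0 polyC0 mul0r addr0.
rewrite -big_split /=; apply: eq_bigr => j _.
by rewrite lez_nat -ltnS ltn_ord polyCD [RHS]mulrDl.
Qed.
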